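(* The VCG-nearest payment rule is not non-decreasing: there exists a combinatorial auction instance (goods, bidders, bundles of interest), an allocation $x$, a bidder $i$, and bid profiles $b,b'$ with $x$ efficient for both, $b_{-i}=b'_{-i}$, $b_i'\ge b_i$ coordinatewise, such that $p_i(b',x)<p_i(b,x)$ under VCG-nearest.
   Context: A combinatorial auction sells goods $M$ to bidders $N=\{1,\dots,n\}$. Each bidder $i$ bids $b_i(K)\ge0$ on each of his bundles of interest (bids on other bundles are $0$). An allocation $x$ gives each bidder $i$ one bundle $x_i$ (a bundle of interest or $\emptyset$), pairwise disjoint; $x$ is efficient for $b$ if it maximizes $W(b,x)=\sum_{i} b_i(x_i)$. For $L\subseteq N$ let $W_L(b_L,x)=\sum_{j\in L}b_j(x_j)$ and $X_L(b_L)$ an allocation maximizing $W_L(b_L,\cdot)$ (allocating goods only among bidders in $L$); write $W_{-i}$, $X_{-i}$ for $L=N\setminus\{i\}$. The VCG payment is $q_i(b,x)=W_{-i}(b_{-i},X_{-i}(b_{-i}))-W_{-i}(b_{-i},x)$. The core is the set of payment vectors $p$ with $\sum_{i\in N\setminus L}p_i\ge W_L(b_L,X_L(b_L))-W_L(b_L,x)$ for all $L\subseteq N$; the minimum-revenue core is the set of core points minimizing $\sum_i p_i$. The VCG-nearest payment $p(b,x)$ is the unique point of the minimum-revenue core minimizing the Euclidean distance $\|p-q(b,x)\|_2$. A payment rule is non-decreasing if for every allocation $x$, every bidder $i$ and all bid profiles $b,b'$ for which $x$ is efficient, with $b_{-i}=b'_{-i}$ and $b_i'\ge b_i$ coordinatewise,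 one has $p_i(b',x)\ge p_i(b,x)$. *)

(* Defs.v *)
From HB Require Import structures.
From mathcomp Require Import all_boot all_order all_algebra.
From mathcomp Require Import reals.
Set Implicit Arguments. Unset Strict Implicit. Unset Printing Implicit Defensive.
Import Order.TTheory GRing.Theory Num.Theory.
Local Open Scope ring_scope.

Section Auction.
Variables (R : realType) (m n : nat).
Notation good := 'I_m.
Notation bidder := 'I_n.

(* B i : the bundles of interest of bidder i;  b i K : bid of bidder i on K *)
Variable B : bidder -> {set {set good}}.

Definition bids_ok (b : bidder -> {set good} -> R) : Prop :=
  forall i K, 0 <= b i K /\ (K \notin B i -> b i K = 0).

Definition feasible (L : {set bidder}) (x : bidder -> {set good}) : bool :=
  [&& [forall i, (x i \in B i) || (x i == set0)],
      [forall i, forall j, (i != j) ==> [disjoint x i & x j]] &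
      [forall j, (j \notin L) ==> (x j == set0)]].

Definition W (L : {set bidder}) (b : bidder -> {set good} -> R)
  (x : bidder -> {set good}) : R := \sum_(j in L) b j (x j).

Definition Wopt (L : {set bidder}) (b : bidder -> {set good} -> R) : R :=
  \big[Num.max/0]_(y : {ffun bidder -> {set good}} | feasible L y) W L b y.

Definition efficient (b : bidder -> {set good} -> R) (x : bidder -> {set good}) : Prop :=
  feasible setT x /\
  forall y : bidder -> {set good}, feasible setT y -> W setT b y <= W setT b x.

Definition vcg (b : bidder -> {set good} -> R) (x : bidder -> {set good})
  (i : bidder) : R :=
  Wopt (setT :\ i) b - W (setT :\ i) b x.

Definition in_core (b : bidder -> {set good} -> R) (x : bidder -> {set good})
  (p : bidder -> R) : Prop :=
  forall L : {set bidder}, Wopt L b - W L b x <= \sum_(i in ~: L) p i.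

Definition in_mrc (b : bidder -> {set good} -> R) (x : bidder -> {set good})
  (p : bidder -> R) : Prop :=
  in_core b x p /\
  forall p' : bidder -> R, in_core b x p' -> \sum_i p i <= \sum_i p' i.

(* squared Euclidean distance (minimizing it = minimizing the distance) *)
Definition sqdist (p q : bidder -> R) : R := \sum_i (p i - q i) ^+ 2.

Definition vcg_nearest (b : bidder -> {set good} -> R) (x : bidder -> {set good})
  (p : bidder -> R) : Prop :=
  in_mrc b x p /\
  forall p' : bidder -> R, in_mrc b x p' -> sqdist p (vcg b x) <= sqdist p' (vcg b x).

End Auction.

(* Main.v *)
Require Import Defs.
From HB Require Import structures.
From mathcomp Require Import all_boot all_order all_algebra.
From mathcomp Require Import reals.
From mathcomp Require Import ring lra.
From Stdlib Require Import FunctionalExtensionality.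
Import Order.TTheory GRing.Theory Num.Theory.
Local Open Scope ring_scope.

Definition i0 : 'I_3 := @Ordinal 3 0 isT.
Definition i1 : 'I_3 := @Ordinal 3 1 isT.
Definition i2 : 'I_3 := @Ordinal 3 2 isT.
Definition g0 : 'I_2 := @Ordinal 2 0 isT.
Definition g1 : 'I_2 := @Ordinal 2 1 isT.
Definition A : {set 'I_2} := [set g0].
Definition Bg : {set 'I_2} := [set g1].
Definition AB : {set 'I_2} := setT.

Definition BB (j : 'I_3) : {set {set 'I_2}} :=
  match val j with 0 => [set A; AB] | 1 => [set Bg] | _ => [set AB] end.
Definition xx (j : 'I_3) : {set 'I_2} :=
  match val j with 0 => A | 1 => Bg | _ => set0 end.
Definition bh {R : realType} (h : R) (j : 'I_3) (K : {set 'I_2}) : R :=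
  match val j with
  | 0 => if K == A then 8 else if K == AB then h else 0
  | 1 => if K == Bg then 8 else 0
  | _ => if K == AB then 12 else 0 end.

Lemma ABneA : (AB == A) = false.
Proof. apply/negbTE/eqP => /setP /(_ g1); rewrite !inE. by []. Qed.
Lemma ABneB : (AB == Bg) = false.
Proof. apply/negbTE/eqP => /setP /(_ g0); rewrite !inE. by []. Qed.
Lemma AneB : (A == Bg) = false.
Proof. apply/negbTE/eqP => /setP /(_ g0); rewrite !inE. by []. Qed.
Lemma BneA : (Bg == A) = false.
Proof. by rewrite eq_sym AneB. Qed.
Lemma AneAB : (A == AB) = false.
Proof. by rewrite eq_sym ABneA. Qed.
Lemma BneAB : (Bg == AB) = false.
Proof. by rewrite eq_sym ABneB. Qed.
Lemma s0neA : (set0 == A) = false.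
Proof. apply/negbTE/eqP => /setP /(_ g0); rewrite !inE. by []. Qed.
Lemma s0neB : (set0 == Bg) = false.
Proof. apply/negbTE/eqP => /setP /(_ g1); rewrite !inE. by []. Qed.
Lemma s0neAB : (set0 == AB) = false.
Proof. apply/negbTE/eqP => /setP /(_ g1); rewrite !inE. by []. Qed.
Lemma AneS0 : (A == set0) = false. Proof. by rewrite eq_sym s0neA. Qed.
Lemma BneS0 : (Bg == set0) = false. Proof. by rewrite eq_sym s0neB. Qed.
Lemma ABneS0 : (AB == set0) = false. Proof. by rewrite eq_sym s0neAB. Qed.
Definition seqs := (ABneA, ABneB, AneB, BneA, AneAB, BneAB, s0neA, s0neB, s0neAB, AneS0, BneS0, ABneS0, eqxx).

Lemma disjAB : [disjoint A & Bg]. Proof. by rewrite disjoints1 !inE. Qed.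
Lemma disjBA : [disjoint Bg & A]. Proof. by rewrite disjoints1 !inE. Qed.
Lemma ndisjABX X : X != set0 -> [disjoint AB & X] = false.
Proof. case/set0Pn=> g Hg; apply/negbTE/negP => /disjoint_setI0/setP/(_ g). by rewrite !inE Hg. Qed.
Lemma ndisjXAB X : X != set0 -> [disjoint X & AB] = false.
Proof. by move=> H; rewrite disjoint_sym ndisjABX. Qed.
Lemma disj0X (X : {set 'I_2}) : [disjoint set0 & X]. Proof. by rewrite -setI_eq0 set0I. Qed.
Lemma disjX0 (X : {set 'I_2}) : [disjoint X & set0]. Proof. by rewrite -setI_eq0 setI0. Qed.

Lemma sum3 {R : realType} (F : 'I_3 -> R) : \sum_(j < 3) F j = F i0 + F i1 + F i2.
Proof.
rewrite !big_ord_recl big_ord0 addr0 addrA.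
by congr (F _ + F _ + F _); apply: val_inj.
Qed.

Lemma W_gen {R : realType} L (b : 'I_3 -> {set 'I_2} -> R) y :
  W L b y = (if i0 \in L then b i0 (y i0) else 0) + (if i1 \in L then b i1 (y i1) else 0)
          + (if i2 \in L then b i2 (y i2) else 0).
Proof. by rewrite /W big_mkcond /= sum3. Qed.

Lemma sumC_gen {R : realType} L (p : 'I_3 -> R) :
  \sum_(i in ~: L) p i = (if i0 \in L then 0 else p i0) + (if i1 \in L then 0 else p i1)
          + (if i2 \in L then 0 else p i2).
Proof. by rewrite big_mkcond /= sum3 !inE; case: (i0 \in L); case: (i1 \in L); case: (i2 \in L). Qed.

Lemma bh0 {R : realType} (h : R) j : bh h j set0 = 0.
Proof. by case: j => [[|[|[|k]]] Hj]; rewrite /bh /= ?seqs. Qed.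

Lemma W_expand {R : realType} (h : R) L y : feasible BB L y ->
  W L (bh h) y = bh h i0 (y i0) + bh h i1 (y i1) + bh h i2 (y i2).
Proof.
case/and3P => _ _ /forallP H3; rewrite W_gen.
have E j : (if j \in L then bh h j (y j) else 0) = bh h j (y j).
  case: ifP => // /negbT Hj; move: (H3 j); rewrite Hj /= => /eqP ->; by rewrite bh0.
by rewrite !E.
Qed.

Lemma feas1 L (y : 'I_3 -> {set 'I_2}) j : feasible BB L y ->
  y j = set0 \/ (y j \in BB j /\ j \in L).
Proof.
case/and3P => /forallP H1 _ /forallP H3.
case: (boolP (j \in L)) => Hj.
  by case/orP: (H1 j) => [H|/eqP H]; [right|left].
by left; apply/eqP; move: (H3 j); rewrite Hj.
Qed.

Lemma feas_cases L y : feasible BB L y ->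
 (y i0 = set0 \/ (y i0 = A /\ i0 \in L) \/ (y i0 = AB /\ i0 \in L)) /\
     (y i1 = set0 \/ (y i1 = Bg /\ i1 \in L)) /\
     (y i2 = set0 \/ (y i2 = AB /\ i2 \in L)) /\
     [disjoint y i0 & y i1] /\ [disjoint y i0 & y i2] /\ [disjoint y i1 & y i2].
Proof.
move=> Hf; have /and3P [_ /forallP H2 _] := Hf.
have D j k : j != k -> [disjoint y j & y k] by move=> H; move: (H2 j) => /forallP /(_ k); rewrite H.
split; last (split; last (split; last by repeat split; apply: D)).
- case: (@feas1 L y i0 Hf) => [|[]]; first by left.
  by rewrite /BB /= !inE => /orP [/eqP->|/eqP->] ?; right; [left|right].
- case: (@feas1 L y i1 Hf) => [|[]]; first by left.
  by rewrite /BB /= !inE => /eqP-> ?; right.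
- case: (@feas1 L y i2 Hf) => [|[]]; first by left.
  by rewrite /BB /= !inE => /eqP-> ?; right.
Qed.

Lemma dAB_B : [disjoint AB & Bg] = false. Proof. by rewrite ndisjABX // BneS0. Qed.
Lemma dB_AB : [disjoint Bg & AB] = false. Proof. by rewrite ndisjXAB // BneS0. Qed.
Lemma dA_AB : [disjoint A & AB] = false. Proof. by rewrite ndisjXAB // AneS0. Qed.
Lemma dAB_AB : [disjoint AB & AB] = false. Proof. by rewrite ndisjXAB // ABneS0. Qed.

Lemma W_bound {R : realType} (h : R) L y c : feasible BB L y ->
  0 <= c -> (i0 \in L -> 8 <= c) -> (i1 \in L -> 8 <= c) -> (i0 \in L -> i1 \in L -> 16 <= c) ->
  (i0 \in L -> h <= c) -> (i2 \in L -> 12 <= c) -> W L (bh h) y <= c.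
Proof.
move=> Hf c0 H0 H1 H01 Hh H2; rewrite W_expand //.
have [C0 [C1 [C2 [D01 [D02 D12]]]]] := @feas_cases L y Hf.
case: C0 => [E0|[[E0 m0]|[E0 m0]]]; case: C1 => [E1|[E1 m1]]; case: C2 => [E2|[E2 m2]];
  move: D01 D02 D12; rewrite E0 E1 E2 ?dAB_B ?dB_AB ?dA_AB ?dAB_AB // => _ _ _;
  rewrite /bh /= ?seqs;
  repeat match goal with H : ?P, H' : ?P -> _ |- _ => specialize (H' H) end; lra.
Qed.

Lemma Wopt_le {R : realType} (h : R) (L : {set 'I_3}) c :
  0 <= c -> (i0 \in L -> 8 <= c) -> (i1 \in L -> 8 <= c) -> (i0 \in L -> i1 \in L -> 16 <= c) ->
  (i0 \in L -> h <= c) -> (i2 \in L -> 12 <= c) -> Wopt BB L (bh h) <= c.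
Proof.
move=> c0 H0 H1 H01 Hh H2; apply: bigmax_le => // y Hy.
exact: W_bound.
Qed.

Lemma Wopt_ge {R : realType} (b : 'I_3 -> {set 'I_2} -> R) L (y : {ffun 'I_3 -> {set 'I_2}}) :
  feasible BB L y -> W L b y <= Wopt BB L b.
Proof. move=> Hy; exact: le_bigmax_cond. Qed.

Lemma ord3P (j : 'I_3) : j = i0 \/ j = i1 \/ j = i2.
Proof. case: j => [[|[|[|k]]] Hj]; [left|right;left|right;right|by []]; exact: val_inj. Qed.

Definition yx : {ffun 'I_3 -> {set 'I_2}} := [ffun j => xx j].
Definition y2 : {ffun 'I_3 -> {set 'I_2}} := [ffun j => if j == i2 then AB else set0].
Definition y0 : {ffun 'I_3 -> {set 'I_2}} := [ffun j => if j == i0 then AB else set0].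

Ltac ordcase j := case: (ord3P j) => [->|[->|->]].

Lemma feas_yx (L : {set 'I_3}) : i0 \in L -> i1 \in L -> feasible BB L yx.
Proof.
move=> m0 m1; apply/and3P; split.
- by apply/forallP => i; ordcase i; rewrite ffunE /xx /BB /= !inE ?eqxx ?orbT.
- apply/forallP => i; apply/forallP => j; ordcase i; ordcase j; rewrite !ffunE /xx /=;
  by rewrite ?disjAB ?disjBA ?disj0X ?disjX0.
- by apply/forallP => i; ordcase i; rewrite ffunE /xx /= ?m0 ?m1 ?eqxx /= ?implybT.
Qed.

Lemma feas_y2 (L : {set 'I_3}) : i2 \in L -> feasible BB L y2.
Proof.
move=> m2; apply/and3P; split.
- by apply/forallP => i; ordcase i; rewrite ffunE /BB /= !inE ?eqxx ?orbT.
- apply/forallP => i; apply/forallP => j; ordcase i; ordcase j; rewrite !ffunE /=;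
  by rewrite ?disjAB ?disjBA ?disj0X ?disjX0.
- by apply/forallP => i; ordcase i; rewrite ffunE /= ?m2 ?eqxx /= ?implybT.
Qed.

Lemma feas_y0 (L : {set 'I_3}) : i0 \in L -> feasible BB L y0.
Proof.
move=> m0; apply/and3P; split.
- by apply/forallP => i; ordcase i; rewrite ffunE /BB /= !inE ?eqxx ?orbT.
- apply/forallP => i; apply/forallP => j; ordcase i; ordcase j; rewrite !ffunE /=;
  by rewrite ?disjAB ?disjBA ?disj0X ?disjX0.
- by apply/forallP => i; ordcase i; rewrite ffunE /= ?m0 ?eqxx /= ?implybT.
Qed.

Lemma e01 : (i0 == i1) = false. Proof. by []. Qed.
Lemma e02 : (i0 == i2) = false. Proof. by []. Qed.
Lemma e10 : (i1 == i0) = false. Proof. by []. Qed.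
Lemma e12 : (i1 == i2) = false. Proof. by []. Qed.
Lemma e20 : (i2 == i0) = false. Proof. by []. Qed.
Lemma e21 : (i2 == i1) = false. Proof. by []. Qed.
Definition eqs := (e01, e02, e10, e12, e20, e21, eqxx).

Section Main.
Context {R : realType}.
Implicit Types (h : R) (p : 'I_3 -> R).

Lemma Wx h (L : {set 'I_3}) : W L (bh h) xx = (if i0 \in L then 8 else 0) + (if i1 \in L then 8 else 0).
Proof. by rewrite W_gen /bh /xx /= !seqs if_same addr0. Qed.

Lemma Wy2 h (L : {set 'I_3}) : i2 \in L -> W L (bh h) y2 = 12.
Proof.
move=> m2; rewrite W_gen !ffunE !eqs m2 /bh /= !seqs !if_same; lra.
Qed.

Lemma Wy0 h (L : {set 'I_3}) : i0 \in L -> W L (bh h) y0 = h.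
Proof.
move=> m0; rewrite W_gen !ffunE !eqs m0 /bh /= !seqs !if_same; lra.
Qed.

Lemma Wyx h (L : {set 'I_3}) : i0 \in L -> i1 \in L -> W L (bh h) yx = 16.
Proof.
move=> m0 m1; transitivity (W L (bh h) xx).
  by rewrite /W; apply: eq_bigr => j _; rewrite ffunE.
rewrite Wx m0 m1; lra.
Qed.

Lemma vcg0 h : 0 <= h -> vcg BB (bh h) xx i0 = 4.
Proof.
move=> h0; rewrite /vcg Wx !inE !eqs /=.
have -> : Wopt BB (setT :\ i0) (bh h) = 12.
  apply/le_anti/andP; split.
    by apply: Wopt_le; rewrite ?inE ?eqs //= => *; lra.
  rewrite -(Wy2 h (setT :\ i0)); last by rewrite !inE.
  by apply: Wopt_ge; apply: feas_y2; rewrite !inE.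
lra.
Qed.

Lemma vcg1a h : 0 <= h <= 12 -> vcg BB (bh h) xx i1 = 4.
Proof.
move=> /andP[h0 h1]; rewrite /vcg Wx !inE !eqs /=.
have -> : Wopt BB (setT :\ i1) (bh h) = 12.
  apply/le_anti/andP; split.
    by apply: Wopt_le; rewrite ?inE ?eqs //= => *; lra.
  rewrite -(Wy2 h (setT :\ i1)); last by rewrite !inE.
  by apply: Wopt_ge; apply: feas_y2; rewrite !inE.
lra.
Qed.

Lemma vcg1b h : 12 <= h -> vcg BB (bh h) xx i1 = h - 8.
Proof.
move=> h1; rewrite /vcg Wx !inE !eqs /=.
have -> : Wopt BB (setT :\ i1) (bh h) = h.
  apply/le_anti/andP; split.
    by apply: Wopt_le; rewrite ?inE ?eqs //= => *; lra.
  rewrite -{1}(Wy0 h (setT :\ i1)); last by rewrite !inE.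
  by apply: Wopt_ge; apply: feas_y0; rewrite !inE.
lra.
Qed.

Lemma vcg2 h : 0 <= h <= 16 -> vcg BB (bh h) xx i2 = 0.
Proof.
move=> /andP[h0 h1]; rewrite /vcg Wx !inE !eqs /=.
have -> : Wopt BB (setT :\ i2) (bh h) = 16.
  apply/le_anti/andP; split.
    by apply: Wopt_le; rewrite ?inE ?eqs //= => *; lra.
  rewrite -(Wyx h (setT :\ i2)); try by rewrite !inE.
  by apply: Wopt_ge; apply: feas_yx; rewrite !inE.
lra.
Qed.

End Main.

Section Main2.
Context {R : realType}.
Implicit Types (h : R) (p : 'I_3 -> R).

Lemma core_lb h p : 0 <= h -> in_core BB (bh h) xx p -> 12 <= p i0 + p i1 /\ 0 <= p i2.
Proof.
move=> h0 Hc; split.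
  have := Hc [set i2]; rewrite sumC_gen Wx !inE !eqs /=.
  have : 12 <= Wopt BB [set i2] (bh h).
    rewrite -(Wy2 h [set i2]) ?inE ?eqs //.
    by apply: Wopt_ge; apply: feas_y2; rewrite !inE.
  lra.
have := Hc [set i0; i1]; rewrite sumC_gen Wx !inE !eqs /=.
have : 16 <= Wopt BB [set i0; i1] (bh h).
  rewrite -(Wyx h [set i0; i1]) ?inE ?eqs //.
  by apply: Wopt_ge; apply: feas_yx; rewrite !inE ?eqs.
lra.
Qed.

Lemma core_cand h p : 0 <= h -> h <= 16 -> 0 <= p i0 -> 0 <= p i1 -> 0 <= p i2 -> 12 <= p i0 + p i1 ->
  4 <= p i0 -> 4 <= p i1 -> h - 8 <= p i1 -> in_core BB (bh h) xx p.
Proof.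
move=> h0 h16 p0 p1 p2 p01 p0' p1' p1h L.
rewrite sumC_gen Wx lerBlDl.
apply: Wopt_le;
case: (i0 \in L); case: (i1 \in L); case: (i2 \in L) => //= *; lra.
Qed.

Definition sq4 (a b : R) : R := (a - 4) ^+ 2 + (b - 0) ^+ 2.

Lemma sumP p : \sum_i p i = p i0 + p i1 + p i2.
Proof. exact: sum3. Qed.

Lemma nearest_char h (q1 : R) (pc : 'I_3 -> R) :
  0 <= h <= 16 -> vcg BB (bh h) xx i1 = q1 ->
  pc i0 = 8 - q1 / 2 -> pc i1 = 4 + q1 / 2 -> pc i2 = 0 ->
  in_core BB (bh h) xx pc ->
  vcg_nearest BB (bh h) xx pc /\
  (forall p, vcg_nearest BB (bh h) xx p -> p i0 = 8 - q1 / 2).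
Proof.
move=> /andP[h0 h1] Hq1 c0 c1 c2 Hcore.
have Hmrc : in_mrc BB (bh h) xx pc.
  split => // p' Hp'; have [a b] := core_lb _ _ h0 Hp'.
  rewrite !sumP c0 c1 c2; lra.
have Hq0 := vcg0 h h0.
have Hq2 : vcg BB (bh h) xx i2 = 0 by apply: vcg2; rewrite h0 h1.
have mrc_shape p : in_mrc BB (bh h) xx p -> p i2 = 0 /\ p i0 + p i1 = 12.
  case=> Hc Hmin; have [a b] := core_lb _ _ h0 Hc.
  have := Hmin _ Hcore; rewrite !sumP c0 c1 c2 => *; split; lra.
have Hsq p : in_mrc BB (bh h) xx p ->
  sqdist p (vcg BB (bh h) xx) - sqdist pc (vcg BB (bh h) xx) = 2 * (p i0 - (8 - q1 / 2)) ^+ 2.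
  move=> /mrc_shape [e2 e01].
  rewrite /sqdist !sumP Hq0 Hq1 Hq2 c0 c1 c2 e2.
  have -> : p i1 = 12 - p i0 by lra.
  by rewrite !expr2; field.
split.
  rewrite /vcg_nearest; split; first exact: Hmrc.
  move=> p' Hp'; have := Hsq _ Hp'.
  have := sqr_ge0 (p' i0 - (8 - q1 / 2)); lra.
move=> p [Hp Hn]; have := Hsq _ Hp; have := Hn _ Hmrc.
move=> H1 H2.
have : (p i0 - (8 - q1 / 2)) ^+ 2 == 0.
  rewrite eq_le sqr_ge0 andbT; lra.
by rewrite sqrf_eq0 subr_eq0 => /eqP.
Qed.

End Main2.

Lemma bids_ok_bh {R : realType} (h : R) : 0 <= h -> bids_ok BB (bh h).
Proof.
move=> h0 j K; ordcase j; rewrite /bh /BB /= !inE; split.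
- by repeat case: ifP => _; lra.
- by case: (K == A); case: (K == AB).
- by case: ifP => _; lra.
- by case: (K == Bg).
- by case: ifP => _; lra.
- by case: (K == AB).
Qed.

Lemma feas_xx : feasible BB setT xx.
Proof.
apply/and3P; split.
- by apply/forallP => i; ordcase i; rewrite /xx /BB /= !inE ?eqxx ?orbT.
- apply/forallP => i; apply/forallP => j; ordcase i; ordcase j; rewrite /xx /=;
  by rewrite ?disjAB ?disjBA ?disj0X ?disjX0.
- by apply/forallP => i; rewrite inE.
Qed.

Lemma eff_bh {R : realType} (h : R) : 0 <= h <= 16 -> efficient BB (bh h) xx.
Proof.
move=> /andP[h0 h1]; split; first exact: feas_xx.
move=> y Hy; rewrite Wx !inE; apply: W_bound => // *; lra.
Qed.

Definition pcA {R : realType} (j : 'I_3) : R := if j == i0 then 6 else if j == i1 then 6 else 0.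
Definition pcB {R : realType} (j : 'I_3) : R := if j == i0 then 5 else if j == i1 then 7 else 0.

Theorem proposition1 (R : realType) :
  exists (m n : nat) (B : 'I_n -> {set {set 'I_m}}) (x : 'I_n -> {set 'I_m})
         (i : 'I_n) (b b' : 'I_n -> {set 'I_m} -> R),
    bids_ok B b /\ bids_ok B b' /\
    efficient B b x /\ efficient B b' x /\
    (forall j, j != i -> b j = b' j) /\
    (forall K, b i K <= b' i K) /\
    (exists p, vcg_nearest B b x p) /\ (exists p', vcg_nearest B b' x p') /\
    (forall p p', vcg_nearest B b x p -> vcg_nearest B b' x p' -> p' i < p i).
Proof.
have h0 : 0 <= (0 : R) <= 16 by apply/andP; split; lra.
have h14 : 0 <= (14 : R) <= 16 by apply/andP; split; lra.
have [NA UA] : vcg_nearest BB (bh (0:R)) xx pcA /\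
   (forall p, vcg_nearest BB (bh (0:R)) xx p -> p i0 = 8 - 4 / 2).
  apply: nearest_char => //.
  - by apply: vcg1a; apply/andP; split; lra.
  - by rewrite /pcA eqs; lra.
  - by rewrite /pcA eqs; lra.
  - by apply: core_cand; rewrite /pcA ?eqs //; lra.
have [NB UB] : vcg_nearest BB (bh (14:R)) xx pcB /\
   (forall p, vcg_nearest BB (bh (14:R)) xx p -> p i0 = 8 - (14 - 8) / 2).
  apply: nearest_char => //.
  - by apply: vcg1b; lra.
  - by rewrite /pcB eqs; lra.
  - by rewrite /pcB eqs; lra.
  - by apply: core_cand; rewrite /pcB ?eqs //; lra.
exists 2%N, 3%N, BB, xx, i0, (bh (0:R)), (bh (14:R)).
split; first by apply: bids_ok_bh.
split; first by apply: bids_ok_bh; lra.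
split; first exact: eff_bh.
split; first exact: eff_bh.
split.
  move=> j; ordcase j => // _; apply: functional_extensionality => K; by [].
split.
  by move=> K; rewrite /bh /=; repeat case: ifP => _; lra.
split; first by exists pcA.
split; first by exists pcB.
move=> p p' Hp Hp'; rewrite (UA _ Hp) (UB _ Hp'); lra.
Qed.
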